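(* Let $d\geq 2$ and $m\geq 1$ be integers. Let $\{e^d_k\}$ and $\{e^{d+m}_k\}$ be the standard bases of $\mathbb{C}^d$ and $\mathbb{C}^{d+m}$, and let $|J\rangle=\sum_{k=1}^d e^d_k\in\mathbb{C}^d$ be the all-ones vector. Define $d\times(d+m)$ matrices $$V_i=\sum_{k=1}^{d}|e^d_k\rangle\langle e^{d+m}_{\mathrm{mod}(k+i-2,\,d+1)+1}|\quad (i=1,\dots,d+1),\qquad V_i=|J\rangle\langle e^{d+m}_i|\quad (i=d+2,\dots,d+m),$$ where $\mathrm{mod}(a,n)\in\{0,\dots,n-1\}$ is the remainder of $a$ modulo $n$, and define the completely positive map $\Phi:M_d\to M_{d+m}$ by $$\Phi(X)=\frac{1}{d(d+m)}\sum_{i=1}^{d+m}V_i^\dagger XV_i .$$ Then $\Phi$ is entanglement breaking.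
   Context: $M_n$ denotes the complex $n\times n$ matrices. A completely positive map $\Phi:M_{d_1}\to M_{d_2}$ is entanglement breaking if $(\mathrm{id}_{M_n}\otimes\Phi)(\rho)$ is separable for every $n$ and every state $\rho$ on $\mathbb{C}^n\otimes\mathbb{C}^{d_1}$; equivalently, its Choi matrix $\sum_{r,s=1}^{d_1}E_{rs}\otimes\Phi(E_{rs})$ is separable. *)

(* Defs.v *)
From HB Require Import structures.
From mathcomp Require Import all_boot all_order all_algebra.
From mathcomp Require Import mxtens.
Set Implicit Arguments. Unset Strict Implicit. Unset Printing Implicit Defensive.
Import Order.TTheory GRing.Theory Num.Theory.
Local Open Scope ring_scope.

(* Complex numbers: any numClosedFieldType C (e.g. the genuine complex numbers
   R[i] over a real closed field R). *)

Section QInfo.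
Variable C : numClosedFieldType.

Definition adjmx {m n} (A : 'M[C]_(m, n)) : 'M[C]_(n, m) := (map_mx Num.conj A)^T.

Definition psdmx {n} (A : 'M[C]_n) : Prop :=
  adjmx A = A /\ forall v : 'cV[C]_n, 0 <= (adjmx v *m A *m v) 0 0.

Definition statemx {n} (rho : 'M[C]_n) : Prop := psdmx rho /\ \tr rho = 1.

(* separable operator on C^n1 (x) C^n2 (Kronecker ordering of tensmx):
   a finite sum of tensor products of positive semidefinite operators *)
Definition separable {n1 n2} (X : 'M[C]_(n1 * n2)) : Prop :=
  exists (N : nat) (A : 'I_N -> 'M[C]_n1) (B : 'I_N -> 'M[C]_n2),
    (forall k, psdmx (A k) /\ psdmx (B k)) /\ X = \sum_(k < N) (A k *t B k).

Definition blockmx {n d1} (rho : 'M[C]_(n * d1)) (a b : 'I_n) : 'M[C]_d1 :=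
  \matrix_(i, j) rho (mxtens_index (a, i)) (mxtens_index (b, j)).

Definition id_tens {d1 d2} (n : nat) (Phi : 'M[C]_d1 -> 'M[C]_d2)
  (rho : 'M[C]_(n * d1)) : 'M[C]_(n * d2) :=
  \sum_(a < n) \sum_(b < n) (delta_mx a b *t Phi (blockmx rho a b)).

Definition linear_map {d1 d2} (Phi : 'M[C]_d1 -> 'M[C]_d2) : Prop :=
  forall (c : C) (X Y : 'M[C]_d1), Phi (c *: X + Y) = c *: Phi X + Phi Y.

Definition completely_positive {d1 d2} (Phi : 'M[C]_d1 -> 'M[C]_d2) : Prop :=
  linear_map Phi /\
  forall (n : nat) (rho : 'M[C]_(n * d1)), psdmx rho -> psdmx (@id_tens d1 d2 n Phi rho).

Definition entanglement_breaking {d1 d2} (Phi : 'M[C]_d1 -> 'M[C]_d2) : Prop :=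
  completely_positive Phi /\
  forall (n : nat) (rho : 'M[C]_(n * d1)), statemx rho ->
    separable (@id_tens d1 d2 n Phi rho).

(* The Kraus operators V_i, 0-based: row r <-> e^d_{r+1}, column c <-> e^{d+m}_{c+1},
   index i <-> V_{i+1}.
   For i < d+1: V has a 1 at (r, c) iff c = (r + i) mod (d+1)
     [1-based: column mod(k+i-2, d+1)+1 for row k];
   for d+1 <= i < d+m: V = |J><e_{i+1}|, i.e. column i is all ones. *)
Definition Vop (d m : nat) (i : 'I_(d + m)) : 'M[C]_(d, d + m) :=
  \matrix_(r < d, c < d + m)
    if (i < d.+1)%N then ((c : nat) == ((r + i) %% d.+1)%N)%:R
    else ((c : nat) == (i : nat))%:R.

Definition Phi_op (d m : nat) (X : 'M[C]_d) : 'M[C]_(d + m) :=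
  ((d * (d + m))%:R)^-1 *: \sum_(i < d + m) (adjmx (@Vop d m i) *m X *m @Vop d m i).

End QInfo.

(* Main.v *)
Require Import Defs.
From HB Require Import structures.
From mathcomp Require Import all_boot all_order all_algebra.
From mathcomp Require Import mxtens.
From mathcomp Require Import all_fingroup all_solvable all_field.
From mathcomp Require Import ring.
Set Implicit Arguments. Unset Strict Implicit. Unset Printing Implicit Defensive.
Import Order.TTheory GRing.Theory Num.Theory.
Local Open Scope ring_scope.

Lemma prim_root_ex (C : numClosedFieldType) n : (n > 0)%N -> {z : C | n.-primitive_root z}.
Proof.
pose p : {poly C} := 'X^n - 1; have [r Dp] := closed_field_poly_normal p.
move=> n_gt0; apply/sigW; rewrite (monicP _) ?monicXnsubC // scale1r in Dp.
have rn1: all n.-unity_root r by apply/allP=> z; rewrite -root_prod_XsubC -Dp.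
have sz_r: (n < (size r).+1)%N.
  by rewrite -(size_prod_XsubC r id) -Dp size_XnsubC.
have [|z] := hasP (has_prim_root n_gt0 rn1 _ sz_r); last by exists z.
by rewrite -separable_prod_XsubC -Dp separable_Xn_sub_1 // pnatr_eq0 -lt0n.
Qed.

Section Gen.
Variable C : numClosedFieldType.

Lemma adjmxE m n (A : 'M[C]_(m, n)) i j : adjmx A i j = (A j i)^*.
Proof. by rewrite !mxE. Qed.

Lemma adjmxM m n p (A : 'M[C]_(m, n)) (B : 'M[C]_(n, p)) :
  adjmx (A *m B) = adjmx B *m adjmx A.
Proof. by rewrite /adjmx map_mxM trmx_mul. Qed.

Lemma adjmxK m n (A : 'M[C]_(m, n)) : adjmx (adjmx A) = A.
Proof. by apply/matrixP => i j; rewrite !mxE conjCK. Qed.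

Lemma adjmxZ m n (a : C) (A : 'M[C]_(m, n)) : adjmx (a *: A) = a^* *: adjmx A.
Proof. by apply/matrixP => i j; rewrite !mxE rmorphM. Qed.

Lemma adjmxD m n (A B : 'M[C]_(m, n)) : adjmx (A + B) = adjmx A + adjmx B.
Proof. by apply/matrixP => i j; rewrite !mxE rmorphD. Qed.

Lemma psd0 n : psdmx (0 : 'M[C]_n).
Proof.
split; first by apply/matrixP => i j; rewrite !mxE rmorph0.
by move=> v; rewrite mulmx0 mul0mx mxE.
Qed.

Lemma psdD n (A B : 'M[C]_n) : psdmx A -> psdmx B -> psdmx (A + B).
Proof.
move=> [hA pA] [hB pB]; split; first by rewrite adjmxD hA hB.
by move=> v; rewrite mulmxDr mulmxDl mxE addr_ge0.
Qed.

Lemma psd_sum n N (F : 'I_N -> 'M[C]_n) : (forall k, psdmx (F k)) -> psdmx (\sum_k F k).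
Proof.
move=> h; apply: (big_ind (@psdmx C n)) => //; [exact: psd0 | exact: psdD].
Qed.

Lemma psdZ n (b : C) (A : 'M[C]_n) : 0 <= b -> psdmx A -> psdmx (b *: A).
Proof.
move=> hb [hA pA]; split; first by rewrite adjmxZ hA conj_Creal // ger0_real.
by move=> v; rewrite -scalemxAr -scalemxAl mxE mulr_ge0.
Qed.

Lemma psd_conj n p (M : 'M[C]_(n, p)) (A : 'M[C]_n) : psdmx A -> psdmx (adjmx M *m A *m M).
Proof.
move=> [hA pA]; split; first by rewrite !adjmxM adjmxK hA mulmxA.
by move=> v; rewrite -!mulmxA mulmxA -adjmxM mulmxA; apply: pA.
Qed.

Lemma psd_conj' n p (M : 'M[C]_(p, n)) (A : 'M[C]_n) : psdmx A -> psdmx (M *m A *m adjmx M).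
Proof. by move=> h; have := psd_conj (adjmx M) h; rewrite adjmxK. Qed.

Lemma psd1 n : psdmx (1%:M : 'M[C]_n).
Proof.
split.
  by apply/matrixP => i j; rewrite !mxE rmorph_nat eq_sym.
move=> v; rewrite mulmx1 mxE; apply: sumr_ge0 => i _.
by rewrite adjmxE mulrC mul_conjC_ge0.
Qed.

Lemma psd_rank1 n (b : C) (w : 'cV[C]_n) : 0 <= b -> psdmx (b *: (w *m adjmx w)).
Proof.
move=> hb; apply: psdZ => //; rewrite -[w in w *m _]mulmx1; exact: psd_conj' (psd1 1).
Qed.

End Gen.

Section Gen2.
Variable C : numClosedFieldType.

Definition Lmx n k (u : 'cV[C]_k) : 'M[C]_(n * k, n) :=
  \matrix_(i, a) (((mxtens_unindex i).1 == a)%:R * u (mxtens_unindex i).2 0).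

Lemma LmxE n k (u : 'cV[C]_k) x y a :
  Lmx n u (mxtens_index (x, y)) a = (x == a)%:R * u y 0.
Proof. by rewrite mxE mxtens_indexK. Qed.

Lemma sum_tens p q (F : 'I_(p * q) -> C) :
  \sum_i F i = \sum_x \sum_y F (mxtens_index (x, y)).
Proof.
rewrite pair_big /= (reindex (@mxtens_index p q)) /=.
  by apply: eq_bigr => -[x y].
by exists (@mxtens_unindex p q) => i _; [apply: mxtens_indexK | apply: mxtens_unindexK].
Qed.

Lemma sum_pick n (a : 'I_n) (F : 'I_n -> C) : \sum_x ((x == a)%:R * F x) = F a.
Proof.
rewrite (bigD1 a) //= eqxx mul1r big1 ?addr0 // => x /negbTE ->; by rewrite mul0r.
Qed.

Lemma quadE p q k (U : 'M[C]_(k, p)) (X : 'M[C]_k) (W : 'M[C]_(k, q)) a b :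
  (adjmx U *m X *m W) a b = \sum_r \sum_r' ((U r a)^* * X r r' * W r' b).
Proof.
rewrite mxE exchange_big; apply: eq_bigr => r' _; rewrite mxE mulr_suml.
by apply: eq_bigr => r _; rewrite adjmxE.
Qed.

End Gen2.

Section Gen3.
Variable C : numClosedFieldType.

Lemma LrhoL n k (u : 'cV[C]_k) (rho : 'M[C]_(n * k)) a b :
  (adjmx (Lmx n u) *m rho *m Lmx n u) a b = (adjmx u *m blockmx rho a b *m u) 0 0.
Proof.
rewrite !quadE sum_tens.
transitivity (\sum_x ((x == a)%:R * \sum_y \sum_x' ((x' == b)%:R *
   \sum_y' ((u y 0)^* * rho (mxtens_index (x, y)) (mxtens_index (x', y')) * u y' 0)))).
  apply: eq_bigr => x _; rewrite mulr_sumr; apply: eq_bigr => y _.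
  rewrite sum_tens mulr_sumr; apply: eq_bigr => x' _.
  rewrite !mulr_sumr; apply: eq_bigr => y' _.
  rewrite !LmxE rmorphM rmorph_nat.
  ring.
rewrite sum_pick; apply: eq_bigr => y _; rewrite sum_pick; apply: eq_bigr => y' _.
by rewrite mxE.
Qed.

Lemma tens_rank1 n k (A : 'M[C]_n) (w : 'cV[C]_k) :
  A *t (w *m adjmx w) = Lmx n w *m A *m adjmx (Lmx n w).
Proof.
apply/matrixP => i j; case: (mxtens_indexP i) => a c; case: (mxtens_indexP j) => b c'.
rewrite tensmxE -[Lmx n w]adjmxK quadE mxE big_ord1 !adjmxK.
transitivity (\sum_r ((r == a)%:R * \sum_r' ((r' == b)%:R * (w c 0 * A r r' * (w c' 0)^*)))).
  by rewrite sum_pick sum_pick adjmxE; ring.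
apply: eq_bigr => r _; rewrite mulr_sumr; apply: eq_bigr => r' _.
rewrite !adjmxE conjCK !LmxE rmorphM rmorph_nat [a == r]eq_sym [b == r']eq_sym; ring.
Qed.

Lemma tensZr m n p q (A : 'M[C]_(m, n)) (b : C) (B : 'M[C]_(p, q)) :
  A *t (b *: B) = b *: (A *t B).
Proof. by apply/matrixP => i j; rewrite !mxE mulrCA. Qed.

Lemma psd_tens_rank1 n k (A : 'M[C]_n) (b : C) (w : 'cV[C]_k) :
  psdmx A -> 0 <= b -> psdmx (A *t (b *: (w *m adjmx w))).
Proof. by move=> hA hb; rewrite tensZr tens_rank1; apply: psdZ => //; apply: psd_conj'. Qed.


End Gen3.

Section Gen4.
Variable C : numClosedFieldType.

Lemma sum_delta n (a b : 'I_n) (F : 'I_n -> 'I_n -> C) :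
  \sum_a' \sum_b' ((delta_mx a' b' : 'M[C]_n) a b * F a' b') = F a b.
Proof.
rewrite (bigD1 a) //= (bigD1 b) //= mxE !eqxx mul1r big1 ?addr0.
  rewrite big1 ?addr0 // => a' /negbTE ha; rewrite big1 // => b' _.
  by rewrite mxE [a == a']eq_sym ha mul0r.
by move=> b' /negbTE hb; rewrite mxE [b == b']eq_sym hb andbF mul0r.
Qed.

Lemma id_tens_eq d1 d2 (Phi : 'M[C]_d1 -> 'M[C]_d2) N (u : 'I_N -> 'cV[C]_d1)
  (w : 'I_N -> 'cV[C]_d2) (be : 'I_N -> C) :
  (forall X, Phi X = \sum_t ((adjmx (u t) *m X *m u t) 0 0 *: (be t *: (w t *m adjmx (w t))))) ->
  forall n (rho : 'M[C]_(n * d1)), @id_tens C d1 d2 n Phi rho =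
   \sum_t ((adjmx (Lmx n (u t)) *m rho *m Lmx n (u t)) *t (be t *: (w t *m adjmx (w t)))).
Proof.
move=> hPhi n rho; apply/matrixP => i j.
case: (mxtens_indexP i) => a c; case: (mxtens_indexP j) => b c'.
rewrite /id_tens summxE.
under eq_bigr => a' _.
  rewrite summxE; under eq_bigr => b' _ do rewrite tensmxE.
  over.
rewrite (sum_delta a b (fun a' b' => Phi (blockmx rho a' b') c c')).
rewrite hPhi !summxE; apply: eq_bigr => t _.
by rewrite tensmxE LrhoL mxE.
Qed.

Lemma EB_general d1 d2 (Phi : 'M[C]_d1 -> 'M[C]_d2) N (u : 'I_N -> 'cV[C]_d1)
  (w : 'I_N -> 'cV[C]_d2) (be : 'I_N -> C) :
  (forall t, 0 <= be t) ->
  (forall X, Phi X = \sum_t ((adjmx (u t) *m X *m u t) 0 0 *: (be t *: (w t *m adjmx (w t))))) ->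
  entanglement_breaking Phi.
Proof.
move=> hbe hPhi; split; first split.
- move=> a X Y; rewrite !hPhi scaler_sumr -big_split; apply: eq_bigr => t _ /=.
  rewrite [a *: (_ *: _)]scalerA -scalerDl; congr (_ *: _).
  by rewrite mulmxDr mulmxDl -scalemxAr -scalemxAl !mxE.
- move=> n rho hrho; rewrite (id_tens_eq hPhi); apply: psd_sum => t.
  by apply: psd_tens_rank1 => //; apply: psd_conj.
- move=> n rho [hrho _]; rewrite (id_tens_eq hPhi).
  exists N, (fun t => adjmx (Lmx n (u t)) *m rho *m Lmx n (u t)),
    (fun t => be t *: (w t *m adjmx (w t))); split => // t.
  by split; [apply: psd_conj | apply: psd_rank1].
Qed.

End Gen4.

Section Om.
Variable C : numClosedFieldType.
Variable n : nat.
Hypothesis n_gt0 : (0 < n)%N.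
Variable om : C.
Hypothesis prim : n.-primitive_root om.

Lemma om_n : om ^+ n = 1.
Proof. exact: prim_expr_order. Qed.

Lemma om_norm : `|om| = 1.
Proof. by apply/eqP; rewrite -(pexpr_eq1 n_gt0) // -normrX om_n normr1. Qed.

Lemma om_conj : om^* = om^-1.
Proof. by rewrite invC_norm om_norm expr1n invr1 mul1r. Qed.

Lemma om_neq0 : om != 0.
Proof. by apply/negP => /eqP h; move: om_n; rewrite h expr0n; case: n n_gt0 => // k _ /eqP; rewrite eq_sym oner_eq0. Qed.

Lemma om_conjX k : (om ^+ k)^* = (om ^+ k)^-1.
Proof. have h : (om ^+ k)^* = om^* ^+ k by exact: rmorphXn. by rewrite h om_conj exprVn. Qed.

Lemma indA c x : (c < n)%N -> (c == x %% n)%N = (om ^+ c == om ^+ x).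
Proof. by move=> hc; rewrite (eq_prim_root_expr prim) [in RHS](modn_small hc). Qed.

Lemma geom (z : C) : z ^+ n = 1 -> \sum_(k < n) z ^+ k = (z == 1)%:R * n%:R.
Proof.
move=> hz; have [->|nz1] := eqVneq z 1.
  by rewrite mul1r (eq_bigr (fun _ => 1)) => [|k _]; rewrite ?expr1n // sumr_const card_ord.
rewrite mul0r; have := subrX1 z n; rewrite hz subrr => /esym/eqP.
by rewrite mulf_eq0 subr_eq0 (negbTE nz1) /= => /eqP.
Qed.

Lemma mulK_eq (a b x y : C) : b * a = 1 -> (x == a * y) = (b * x == y).
Proof.
move=> h; apply/eqP/eqP => [->|<-]; first by rewrite mulrA h mul1r.
by rewrite mulrA (mulrC a b) h mul1r.
Qed.

Lemma om_inv r : (r <= n)%N -> om ^+ (n - r) * om ^+ r = 1.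
Proof. by move=> hr; rewrite -exprD subnK // om_n. Qed.

Lemma cyc_count (c c' r r' : nat) : (c < n)%N -> (c' < n)%N -> (r < n)%N ->
  \sum_(i < n) ((c == (r + i) %% n)%N%:R * (c' == (r' + i) %% n)%N%:R : C)
  = (om ^+ (r' + c) == om ^+ (r + c'))%:R.
Proof.
move=> hc hc' hr.
have [i0 hi0] : {i0 : 'I_n | val i0 = ((c + (n - r)) %% n)%N}.
  by exists (Ordinal (ltn_pmod (c + (n - r)) n_gt0)).
have key : forall i : 'I_n, (c == (r + i) %% n)%N = (i == i0).
  move=> i; rewrite indA // -val_eqE hi0 (indA _ (ltn_ord i)) !exprD.
  by rewrite (mulK_eq _ _ (om_inv (ltnW hr))) eq_sym mulrC.
rewrite (bigD1 i0) //= big1 ?addr0; last first.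
  move=> i /negbTE hi; have := key i; move=> ->; by rewrite hi mul0r.
rewrite key eqxx mul1r; congr (_%:R).
rewrite indA // !exprD hi0 prim_expr_mod // exprD.
rewrite (mulK_eq _ _ (om_inv (ltnW hr))).
by rewrite [in RHS]eq_sym; congr (_ == _); ring.
Qed.

Lemma conjXX a k : ((om ^+ a) ^+ k)^* = ((om ^+ a)^-1) ^+ k.
Proof. by rewrite -exprM om_conjX exprM exprVn. Qed.

Lemma omX_neq0 a : om ^+ a != 0.
Proof. exact: expf_neq0 om_neq0. Qed.

Lemma omXn a : (om ^+ a) ^+ n = 1.
Proof. by rewrite exprAC om_n expr1n. Qed.

Lemma fourier_sum (c c' r r' : nat) :
  \sum_(k < n) (((om ^+ r) ^+ k)^* * (om ^+ r') ^+ k * ((om ^+ c) ^+ k * ((om ^+ c') ^+ k)^*))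
  = (om ^+ (r' + c) == om ^+ (r + c'))%:R * n%:R.
Proof.
pose z := (om ^+ r)^-1 * om ^+ r' * (om ^+ c * (om ^+ c')^-1).
rewrite (eq_bigr (fun k : 'I_n => z ^+ k)); last first.
  by move=> k _; rewrite !conjXX /z -!exprMn.
rewrite geom; last by rewrite /z !exprMn !exprVn !omXn invr1 !mulr1.
congr (_%:R * _); have -> : z = (om ^+ r' * om ^+ c) / (om ^+ r * om ^+ c').
  rewrite /z; field; rewrite ?omX_neq0 //. 
have -> : (1 : C) = 1 / 1 by rewrite divr1.
by rewrite eqr_div ?mulf_neq0 ?omX_neq0 ?oner_neq0 // mulr1 mul1r !exprD.
Qed.
End Om.

Section Conc.
Variable C : numClosedFieldType.
Variables d m : nat.
Hypothesis hm : (1 <= m)%N.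
Variable om : C.
Hypothesis prim : (d.+1).-primitive_root om.

Let n := d.+1.
Let c0 : C := ((d * (d + m))%:R)^-1.

Definition ut (t : 'I_(d.+1 + (d + m))) : 'cV[C]_d :=
  match split t with
  | inl k => \col_(r < d) ((om ^+ r) ^+ k)
  | inr _ => const_mx 1 end.

Definition wt (t : 'I_(d.+1 + (d + m))) : 'cV[C]_(d + m) :=
  match split t with
  | inl k => \col_(c < d + m) (if (c < d.+1)%N then (om ^+ c) ^+ k else 0)
  | inr j => \col_(c < d + m) (((c : nat) == (j : nat))%:R) end.

Definition bt (t : 'I_(d.+1 + (d + m))) : C :=
  match split t with
  | inl _ => c0 / (d.+1)%:R
  | inr j => if (d.+1 <= j)%N then c0 else 0 end.

Lemma bt_ge0 t : 0 <= bt t.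
Proof.
have hc0 : 0 <= c0 by rewrite /c0 invr_ge0 ler0n.
rewrite /bt; case: (split t) => [k|j]; first by rewrite divr_ge0 ?ler0n.
by case: ifP.
Qed.

Lemma sl (k : 'I_d.+1) : split (lshift (d + m) k) = inl _ k.
Proof. exact: (unsplitK (inl _ k)). Qed.
Lemma sr (k : 'I_(d + m)) : split (rshift d.+1 k) = inr _ k.
Proof. exact: (unsplitK (inr _ k)). Qed.

Lemma coef (r r' : 'I_d) (c c' : 'I_(d + m)) :
  c0 * \sum_(i < d + m) ((@Vop C d m i r c)^* * @Vop C d m i r' c')
  = \sum_t ((ut t r 0)^* * ut t r' 0 * (bt t * (wt t c 0 * (wt t c' 0)^*))).
Proof.
have hle : (d.+1 <= d + m)%N by rewrite -addn1 leq_add2l.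
transitivity (c0 * \sum_(i < d + m) ((i < d.+1)%N%:R * (((c : nat) == (r + i) %% d.+1)%N%:R
     * ((c' : nat) == (r' + i) %% d.+1)%N%:R))
   + c0 * \sum_(i < d + m) ((d.+1 <= i)%N%:R * (((c : nat) == i)%:R * ((c' : nat) == i)%:R))).
  rewrite -mulrDr -big_split; congr (_ * _); apply: eq_bigr => i _.
  rewrite !mxE; case: ltnP => hi /=; rewrite rmorph_nat; ring.
rewrite [in RHS]sumr_add; congr (_ + _).
- have -> : \sum_(i < d + m) ((i < d.+1)%N%:R * (((c : nat) == (r + i) %% d.+1)%N%:R
     * ((c' : nat) == (r' + i) %% d.+1)%N%:R)) =
     \sum_(i < d.+1) (((c : nat) == (r + i) %% d.+1)%N%:R
     * ((c' : nat) == (r' + i) %% d.+1)%N%:R : C).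
    rewrite (big_ord_widen _ (fun i => ((c : nat) == (r + i) %% d.+1)%N%:R
     * ((c' : nat) == (r' + i) %% d.+1)%N%:R : C) hle) [RHS]big_mkcond.
    by apply: eq_bigr => i _; case: ifP => _; rewrite ?mul1r ?mul0r.
  rewrite [RHS](eq_bigr (fun k : 'I_d.+1 => c0 / n%:R * (((om ^+ r) ^+ k)^* * (om ^+ r') ^+ k *
     ((if (c < d.+1)%N then (om ^+ c) ^+ k else 0) *
      (if (c' < d.+1)%N then (om ^+ c') ^+ k else 0)^*)))); last first.
    by move=> k _; rewrite /ut /wt /bt sl !mxE; ring.
  rewrite -mulr_sumr.
  case hc: (c < d.+1)%N; last first.
    rewrite big1 ?mulr0; last first.
      move=> i _; rewrite (@gtn_eqF ((r + i) %% d.+1) c) ?mul0r //.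
      by rewrite (leq_trans (ltn_pmod _ _)) // leqNgt hc.
    by rewrite big1 ?mulr0 // => k _; rewrite !mul0r mulr0.
  case hc': (c' < d.+1)%N; last first.
    rewrite big1 ?mulr0; last first.
      move=> i _; rewrite (@gtn_eqF ((r' + i) %% d.+1) c') ?mulr0 //.
      by rewrite (leq_trans (ltn_pmod _ _)) // leqNgt hc'.
    by rewrite big1 ?mulr0 // => k _; rewrite rmorph0 !mulr0.
  rewrite (cyc_count (ltn0Sn d) prim) //; last by rewrite ltnS ltnW.
  rewrite (fourier_sum (ltn0Sn d) prim) /n.
  by field; rewrite nat1r pnatr_eq0.
- rewrite mulr_sumr; apply: eq_bigr => j _.
  rewrite /ut /wt /bt sr !mxE rmorph1 rmorph_nat.
  by case: ifP => _; rewrite /= ?mulr1n ?mulr0n; ring.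
Qed.


Lemma nf (I : finType) p (G H : I -> 'I_p -> 'I_p -> C) (Xm : 'I_p -> 'I_p -> C) :
  (forall i r r', G i r r' = Xm r r' * H i r r') ->
  \sum_i \sum_r \sum_r' G i r r' = \sum_r \sum_r' (Xm r r' * \sum_i H i r r').
Proof.
move=> hG; rewrite (eq_bigr (fun i => \sum_r \sum_r' Xm r r' * H i r r')); last first.
  by move=> i _; apply: eq_bigr => r _; apply: eq_bigr => r' _; exact: hG.
rewrite exchange_big; apply: eq_bigr => r _; rewrite exchange_big; apply: eq_bigr => r' _.
by rewrite mulr_sumr.
Qed.

Lemma Phi_decomp (X : 'M[C]_d) : @Phi_op C d m X =
  \sum_t ((adjmx (ut t) *m X *m ut t) 0 0 *: (bt t *: (wt t *m adjmx (wt t)))).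
Proof.
apply/matrixP => c c'; rewrite /Phi_op mxE !summxE.
under eq_bigr => i _ do rewrite quadE.
under [RHS]eq_bigr => t _ do rewrite mxE [X in _ * X]mxE [X in _ * (_ * X)]mxE big_ord1 adjmxE quadE mulr_suml.
under [RHS]eq_bigr => t _ do under eq_bigr => r _ do rewrite mulr_suml.
rewrite (nf (Xm := fun r r' => X r r') (H := fun t r r' => (ut t r 0)^* * ut t r' 0 * (bt t * (wt t c 0 * (wt t c' 0)^*)))); last first.
  by move=> t r r' /=; ring.
rewrite (nf (Xm := fun r r' => X r r') (H := fun i r r' => (@Vop C d m i r c)^* * @Vop C d m i r' c')); last first.
  by move=> t r r' /=; ring.
rewrite mulr_sumr; apply: eq_bigr => r _; rewrite mulr_sumr; apply: eq_bigr => r' _.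
by rewrite -coef mulrCA.
Qed.

End Conc.

Theorem mainTheorem3 (C : numClosedFieldType) (d m : nat) :
  (2 <= d)%N -> (1 <= m)%N -> entanglement_breaking (@Phi_op C d m).
Proof.
move=> _ hm; have [om prim] := prim_root_ex C (ltn0Sn d).
exact: (EB_general (@bt_ge0 C d m) (Phi_decomp hm prim)).
Qed.
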